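(* Let $X=\{(x,s)\in\mathbb{R}^n\times\mathbb{R}^n : e^Tx=1,\ x-s\le0,\ -x-s\le0\}$, where $e=(1,\dots,1)^T$, and let $(a,b)\in\mathbb{R}^n\times\mathbb{R}^n$. Let $(x^*,s^* )=P_X(a,b)$ denote the Euclidean projection of $(a,b)$ onto $X$. Then $$x^*=\tfrac12\big(\max\{0,a+b-\mu e\}-\max\{0,b-a+\mu e\}\big),\qquad s^*=\tfrac12\big(\max\{0,b-a+\mu e\}+\max\{0,a+b-\mu e\}\big),$$ where the maxima are taken componentwise and $\mu\in\mathbb{R}$ is a root of $$t(u):=\sum_{i=1}^n\Big(\max\{0,a_i+b_i-u\}-\max\{0,b_i-a_i+u\}\Big)-2.$$ *)

(* Defs.v *)
From mathcomp Require Import all_boot all_order all_algebra.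
Set Implicit Arguments. Unset Strict Implicit. Unset Printing Implicit Defensive.
Import Order.TTheory GRing.Theory Num.Theory.
Local Open Scope ring_scope.

Definition inX (R : realFieldType) (n : nat) (x s : 'rV[R]_n) : Prop :=
  \sum_(i < n) x 0 i = 1 /\
  (forall i : 'I_n, x 0 i - s 0 i <= 0 /\ - x 0 i - s 0 i <= 0).

Definition sqdist (R : realFieldType) (n : nat) (x s a b : 'rV[R]_n) : R :=
  \sum_(i < n) ((x 0 i - a 0 i) ^+ 2 + (s 0 i - b 0 i) ^+ 2).

Definition is_projX (R : realFieldType) (n : nat) (a b x s : 'rV[R]_n) : Prop :=
  inX x s /\ forall x' s' : 'rV[R]_n, inX x' s' -> sqdist x s a b <= sqdist x' s' a b.

Definition tfun (R : realFieldType) (n : nat) (a b : 'rV[R]_n) (u : R) : R :=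
  \sum_(i < n) (Num.max 0 (a 0 i + b 0 i - u) - Num.max 0 (b 0 i - a 0 i + u)) - 2.

Definition xstar (R : realFieldType) (n : nat) (a b : 'rV[R]_n) (mu : R) : 'rV[R]_n :=
  \row_i (2^-1 * (Num.max 0 (a 0 i + b 0 i - mu) - Num.max 0 (b 0 i - a 0 i + mu))).

Definition sstar (R : realFieldType) (n : nat) (a b : 'rV[R]_n) (mu : R) : 'rV[R]_n :=
  \row_i (2^-1 * (Num.max 0 (b 0 i - a 0 i + mu) + Num.max 0 (a 0 i + b 0 i - mu))).

(* Main.v *)
Require Import Defs.
From mathcomp Require Import all_boot all_order all_algebra.
From mathcomp Require Import ring lra.
Import Order.TTheory GRing.Theory Num.Theory.
Local Open Scope ring_scope.

Lemma maxcase (R : realFieldType) (y : R) :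
  (Num.max 0 y = y /\ 0 <= y) \/ (Num.max 0 y = 0 /\ y <= 0).
Proof.
rewrite /Order.max; case: ltrP => h; [left|right]; split => //; exact: ltW.
Qed.

Lemma key (R : realFieldType) (a b mu x s : R) : x - s <= 0 -> -x - s <= 0 ->
  (x - 2^-1 * (Num.max 0 (a + b - mu) - Num.max 0 (b - a + mu))) ^+ 2 +
  (s - 2^-1 * (Num.max 0 (b - a + mu) + Num.max 0 (a + b - mu))) ^+ 2 -
  2 * mu * (x - 2^-1 * (Num.max 0 (a + b - mu) - Num.max 0 (b - a + mu)))
  <= ((x - a) ^+ 2 + (s - b) ^+ 2) -
     ((2^-1 * (Num.max 0 (a + b - mu) - Num.max 0 (b - a + mu)) - a) ^+ 2 +
      (2^-1 * (Num.max 0 (b - a + mu) + Num.max 0 (a + b - mu)) - b) ^+ 2).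
Proof.
move=> h1 h2.
have [[-> H1]|[-> H1]] := maxcase _ (a + b - mu);
have [[-> H2]|[-> H2]] := maxcase _ (b - a + mu); nra.
Qed.

Theorem mainTheorem7 (R : realFieldType) (n : nat) (a b : 'rV[R]_n) (mu : R) :
  tfun a b mu = 0 ->
  is_projX a b (xstar a b mu) (sstar a b mu) /\
  (forall x s : 'rV[R]_n, is_projX a b x s -> x = xstar a b mu /\ s = sstar a b mu).
Proof.
move=> ht.
set xs := xstar a b mu; set ss := sstar a b mu.
have hxs : \sum_(i < n) xs 0 i = 1.
  rewrite /xs /xstar; under eq_bigr => i _ do rewrite mxE.
  rewrite -mulr_sumr.
  move/eqP: ht; rewrite /tfun subr_eq0 => /eqP ->.
  by rewrite mulVf // pnatr_eq0.
have inXs : inX xs ss.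
  split => // i; rewrite /xs /ss /xstar /sstar !mxE.
  have [[-> H1]|[-> H1]] := maxcase _ (a 0 i + b 0 i - mu);
  have [[-> H2]|[-> H2]] := maxcase _ (b 0 i - a 0 i + mu); split; lra.
have gap : forall x s, inX x s -> \sum_(i < n) ((x 0 i - xs 0 i)^+2 + (s 0 i - ss 0 i)^+2)
     <= sqdist x s a b - sqdist xs ss a b.
  move=> x s [hx hc].
  have E : \sum_(i < n) (2 * mu * (x 0 i - xs 0 i)) = 0.
    by rewrite -mulr_sumr sumrB hx hxs subrr mulr0.
  have L : \sum_(i < n) (((x 0 i - xs 0 i)^+2 + (s 0 i - ss 0 i)^+2) - 2 * mu * (x 0 i - xs 0 i))
     <= sqdist x s a b - sqdist xs ss a b.
    rewrite /sqdist -sumrB; apply: ler_sum => i _.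
    rewrite /xs /ss /xstar /sstar !mxE; have [h1 h2] := hc i; exact: key.
  by rewrite sumrB E subr0 in L.
split.
  split => // x' s' h'.
  rewrite -subr_ge0; apply: le_trans (gap _ _ h').
  by apply: sumr_ge0 => i _; apply: addr_ge0; apply: sqr_ge0.
move=> x s [hin hmin].
have h1 := hmin _ _ inXs.
have h2 := gap _ _ hin.
have hs : \sum_(i < n) ((x 0 i - xs 0 i)^+2 + (s 0 i - ss 0 i)^+2) = 0.
  apply/eqP; rewrite eq_le; apply/andP; split.
    by apply: le_trans h2 _; rewrite subr_le0.
  by apply: sumr_ge0 => i _; apply: addr_ge0; apply: sqr_ge0.
have hi := psumr_eq0P (fun i _ => addr_ge0 (sqr_ge0 (x 0 i - xs 0 i)) (sqr_ge0 (s 0 i - ss 0 i))) hs.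
have each : forall i, x 0 i = xs 0 i /\ s 0 i = ss 0 i.
  move=> i; have /eqP := hi i isT.
  rewrite paddr_eq0 ?sqr_ge0 // !sqrf_eq0 !subr_eq0 => /andP[/eqP -> /eqP ->]; done.
by split; apply/rowP => i; have [] := each i.
Qed.
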